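(* Let $t\in[n]$ and let $S\subseteq N$ be a $t$-switchable set (maximal or not) such that $P^{\langle t\rangle}_S$ is an associated prime of $\mathcal{I}^{\langle t\rangle}$. Then $\tilde{\mathcal{I}}^{\langle t\rangle}_S$ is contained in the $P^{\langle t\rangle}_S$-primary component of $\mathcal{I}^{\langle t\rangle}$ (in any primary decomposition of $\mathcal{I}^{\langle t\rangle}$).
   Context: Fix positive integers $n, r_1,\dots,r_n$, let $N=[r_1]\times\cdots\times[r_n]$, and let $R$ be the polynomial ring over a field in the variables $x_a$, $a\in N$. For $a,b\in N$ and $i\in[n]$, ${\rm s}(i,a,b)\in N$ has $i$-th component $b_i$ and other components equal to those of $a$. Let $d(a,b)=\#\{j: a_j\neq b_j\}$ and $f_{i,a,b}=x_ax_b-x_{{\rm s}(i,a,b)}x_{{\rm s}(i,b,a)}$. Let $\mathcal{I}^{\langle t\rangle}=(f_{i,a,b}: a,b\in N,\ d(a,b)=2,\ i\in[t])$. A subset $S\subseteq N$ is $t$-switchable if for all $a,b\in S$ with $d(a,b)=2$ and all $i\in[t]$, ${\rm s}(i,a,b)\in S$. Elements $a,b\in S$ are connected in $S$ if there are $a_0=a,\dots,a_k=b$ in $S$ with $d(a_{j-1},a_j)\le 1$ for all $j$. For $t$-switchable $S$: $\tilde{\mathcal{I}}^{\langle t\rangle}_S=(f_{i,a,b}: i\in[t],\ a,b \text{ connected in } S)$, $\mathrm{Var}^{\langle t\rangle}_S=(x_a: a\notin S)$, $P^{\langle t\rangle}_S=\mathrm{Var}^{\langle t\rangle}_S+\tilde{\mathcal{I}}^{\langle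 t\rangle}_S$. *)

(* Defs.v *)
From HB Require Import structures.
From mathcomp Require Import all_boot all_algebra.
From mathcomp Require Import mpoly.

Set Implicit Arguments.
Unset Strict Implicit.
Unset Printing Implicit Defensive.

Import GRing.Theory.
Local Open Scope ring_scope.

Section Ideals.
Variable R : comNzRingType.

Definition is_ideal (I : R -> Prop) : Prop :=
  [/\ I 0, (forall x y, I x -> I y -> I (x + y)) & (forall a x, I x -> I (a * x))].

Definition ideal_gen (G : R -> Prop) : R -> Prop :=
  fun p => exists s : seq (R * R), (forall q, q \in s -> G q.2) /\
                                  p = \sum_(q <- s) q.1 * q.2.

Definition proper_ideal (I : R -> Prop) : Prop := is_ideal I /\ ~ I 1.

Definition prime_ideal (P : R -> Prop) : Prop :=
  proper_ideal P /\ forall a b, P (a * b) -> P a \/ P b.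

Definition radical (I : R -> Prop) : R -> Prop := fun p => exists k : nat, I (p ^+ k).

Definition primary_ideal (Q : R -> Prop) : Prop :=
  proper_ideal Q /\ forall a b, Q (a * b) -> Q a \/ radical Q b.

Definition associated_prime (I P : R -> Prop) : Prop :=
  prime_ideal P /\ exists f : R, forall p, P p <-> I (p * f).

Definition primary_decomposition (I : R -> Prop) (m : nat) (Q : 'I_m -> R -> Prop) : Prop :=
  [/\ forall j, primary_ideal (Q j),
      forall p, I p <-> (forall j, Q j p)
    & forall j k, (forall p, radical (Q j) p <-> radical (Q k) p) -> j = k].

Definition subideal (I J : R -> Prop) : Prop := forall p, I p -> J p.

End Ideals.

Section Setting.
Variables (n : nat) (r : 'I_n -> nat).

(* N = [r_1] x ... x [r_n] (0-based coordinates) *)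
Definition Nset := {dffun forall j : 'I_n, 'I_(r j)}.

Definition sw (i : 'I_n) (a b : Nset) : Nset :=
  finfun (fun j : 'I_n => if j == i then b j else a j).

Definition dist (a b : Nset) : nat := #|[set j : 'I_n | a j != b j]|.

(* t-switchable sets; i ranges over [t], i.e. 0-based indices i < t *)
Definition switchable (t : nat) (S : {set Nset}) : Prop :=
  forall a b, a \in S -> b \in S -> dist a b = 2 ->
  forall i : 'I_n, (i < t)%N -> sw i a b \in S.

Definition connected_in (S : {set Nset}) (a b : Nset) : bool :=
  [&& a \in S, b \in S &
      connect [rel x y | [&& x \in S, y \in S & (dist x y <= 1)%N]] a b].

Variable K : fieldType.

Definition Rpoly := {mpoly K[#|Nset|]}.

Definition xv (a : Nset) : Rpoly := 'X_(enum_rank a).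

Definition fgen (i : 'I_n) (a b : Nset) : Rpoly :=
  xv a * xv b - xv (sw i a b) * xv (sw i b a).

Definition Ibin (t : nat) : Rpoly -> Prop :=
  ideal_gen (fun p => exists (i : 'I_n) (a b : Nset),
                  [/\ (i < t)%N, dist a b = 2 & p = fgen i a b]).

Definition Itilde (t : nat) (S : {set Nset}) : Rpoly -> Prop :=
  ideal_gen (fun p => exists (i : 'I_n) (a b : Nset),
                  [/\ (i < t)%N, connected_in S a b & p = fgen i a b]).

(* Var^<t>_S + \tilde I^<t>_S, generated by the union of generators *)
Definition Pideal (t : nat) (S : {set Nset}) : Rpoly -> Prop :=
  ideal_gen (fun p => (exists a : Nset, a \notin S /\ p = xv a) \/
                      exists (i : 'I_n) (a b : Nset),
                        [/\ (i < t)%N, connected_in S a b & p = fgen i a b]).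

End Setting.

(* Main.v *)
Require Import Defs.
From HB Require Import structures.
From mathcomp Require Import all_boot all_algebra.
From mathcomp Require Import mpoly.
From mathcomp Require Import ring.

Set Implicit Arguments.
Unset Strict Implicit.
Unset Printing Implicit Defensive.
Import GRing.Theory.
Local Open Scope ring_scope.

Section IG.
Variable R : comNzRingType.
Variable G : R -> Prop.

Lemma ig0 : ideal_gen G 0.
Proof. by exists [::]; rewrite big_nil. Qed.

Lemma igG g : G g -> ideal_gen G g.
Proof.
move=> Gg; exists [:: (1, g)]; split; first by move=> q; rewrite inE => /eqP ->.
by rewrite big_seq1 mul1r.
Qed.

Lemma igD x y : ideal_gen G x -> ideal_gen G y -> ideal_gen G (x + y).
Proof.
move=> [s [Hs ->]] [s' [Hs' ->]]; exists (s ++ s'); split; last by rewrite big_cat.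
by move=> q; rewrite mem_cat => /orP[]; [apply: Hs|apply: Hs'].
Qed.

Lemma igM a x : ideal_gen G x -> ideal_gen G (a * x).
Proof.
move=> [s [Hs ->]]; exists [seq (a * q.1, q.2) | q <- s]; split.
  by move=> q /mapP[q' q's ->] /=; apply: Hs.
rewrite big_map big_distrr /=; apply: eq_bigr => q _; by rewrite mulrA.
Qed.

Lemma ig_sub (J : R -> Prop) : is_ideal J -> (forall g, G g -> J g) ->
  forall p, ideal_gen G p -> J p.
Proof.
move=> [J0 JD JM] HG p [s [Hs ->]]; elim: s Hs => [|q s IH] Hs.
  by rewrite big_nil.
rewrite big_cons; apply: JD; first by apply: JM; apply: HG; apply: Hs; rewrite inE eqxx.
by apply: IH => q' q's; apply: Hs; rewrite inE q's orbT.
Qed.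
End IG.

Lemma connect_inv (T : finType) (e : rel T) (Q : T -> Prop) x y :
  connect e x y -> Q x -> (forall u v, Q u -> e u v -> Q v) -> Q y.
Proof.
move/connectP=> [p]; elim: p x => [|z p IH] x /=; first by move=> _ -> .
move=> /andP[exz pz] ey Qx step.
exact: (IH z pz ey (step _ _ Qx exz) step).
Qed.

Section Comb.
Variables (n : nat) (r : 'I_n -> nat).
Implicit Types a b c d p q z : Nset r.

Lemma swA i p q : sw i p q i = q i.
Proof. by rewrite /sw ffunE eqxx. Qed.

Lemma swO i p q j : j != i -> sw i p q j = p j.
Proof. by move=> /negbTE h; rewrite /sw ffunE h. Qed.

Lemma swB i p q z : sw i (sw i p q) z = sw i p z.
Proof.
apply/ffunP => j; rewrite /sw !ffunE; by case: (j == i).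
Qed.

Lemma swC i p q q' : q i = q' i -> sw i p q = sw i p q'.
Proof.
move=> h; apply/ffunP => j; rewrite /sw !ffunE; case: eqP => // ->; exact: h.
Qed.

Lemma swK i p : sw i p p = p.
Proof. by apply/ffunP => j; rewrite /sw !ffunE; case: (j == i). Qed.

Lemma swE i p q : p i = q i -> sw i p q = p.
Proof. by move=> h; rewrite -(swC _ h) swK. Qed.

Lemma dist_le1 i p q : (dist p q <= 1)%N ->
  (sw i p q = p /\ sw i q p = q) \/ (sw i p q = q /\ sw i q p = p).
Proof.
move=> hd; case: (eqVneq (p i) (q i)) => h.
  by left; split; apply: swE => //.
right; split; apply/ffunP => j; rewrite /sw ffunE; case: eqP => [->//|/eqP hj].
  apply/eqP; apply: contraT => hpq.
  have: [set i; j] \subset [set k | p k != q k].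
    by apply/subsetP => k; rewrite !inE => /orP[]/eqP->; rewrite ?h.
  move/subset_leq_card; rewrite cards2 eq_sym (negbTE hj) -/(dist _ _).
  by move=> h2; move: (leq_trans h2 hd).
apply/eqP; apply: contraT => hpq.
have: [set i; j] \subset [set k | p k != q k].
  by apply/subsetP => k; rewrite !inE => /orP[]/eqP->; rewrite ?h // eq_sym.
move/subset_leq_card; rewrite cards2 eq_sym (negbTE hj) -/(dist _ _).
by move=> h2; move: (leq_trans h2 hd).
Qed.

Lemma dist_sw_le i c d a b : (dist c d <= 1)%N -> (dist (sw i c a) (sw i d b) <= 2)%N.
Proof.
move=> hd; rewrite /dist.
have: [set j | sw i c a j != sw i d b j] \subset i |: [set j | c j != d j].
  apply/subsetP => j; rewrite !inE; case: (eqVneq j i) => //= hj.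
  by rewrite !swO.
move/subset_leq_card => h; apply: (leq_trans h).
by apply: (leq_trans (leq_card_setU _ _)); rewrite cards1.
Qed.

Lemma dist_sw1 i a b : (dist a (sw i a b) <= 1)%N.
Proof.
rewrite /dist -(cards1 i); apply: subset_leq_card; apply/subsetP => j.
rewrite !inE; apply: contraR => hj; by rewrite swO.
Qed.

Lemma dist_uniq p q j k : (dist p q <= 1)%N -> p j != q j -> p k != q k -> k = j.
Proof.
move=> hd hj hk; apply/eqP; apply: contraT => hkj.
have: [set j; k] \subset [set l | p l != q l].
  by apply/subsetP => l; rewrite !inE => /orP[]/eqP->.
move/subset_leq_card; rewrite cards2 eq_sym hkj -/(dist _ _).
by move=> h2; move: (leq_trans h2 hd).
Qed.

Lemma G_step t S (i : 'I_n) x y : switchable t S -> (i < t)%N -> x \in S -> y \in S ->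
  (dist x y <= 1)%N -> forall z, sw i x z \in S -> sw i y z \in S.
Proof.
move=> hS hi xS yS hd z wS.
case: (eqVneq (x i) (y i)) => hxy; last first.
  have ->: sw i y z = sw i x z; last by [].
  case: (dist_le1 i hd) => [[h _]|[h _]].
    by move: hxy; rewrite -{1}h swA eqxx.
  by rewrite -{1}h swB.
case: (eqVneq x y) => [<-//|hne].
have [j hj] : exists j, x j != y j.
  apply/existsP; apply: contraR hne => /existsPn h; apply/eqP/ffunP => k.
  by apply/eqP; move: (h k); rewrite negbK.
have hji : j != i by apply: contraNneq hj => ->; rewrite hxy.
case: (eqVneq (z i) (x i)) => hz.
  by rewrite swE // -hxy hz.
have hd2 : dist y (sw i x z) = 2.
  have e2 : #|[set i; j]| = 2 by rewrite cards2 eq_sym hji.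
  rewrite /dist -e2; apply: eq_card => k; rewrite !inE.
  case: (eqVneq k i) => [->|hki]; first by rewrite swA -hxy eq_sym hz.
  rewrite swO //; case: (eqVneq k j) => [->|hkj]; first by rewrite eq_sym.
  apply/negbTE; apply: contraNN hkj => h; apply/eqP; apply: (dist_uniq hd hj).
  by rewrite eq_sym.
have := hS _ _ yS wS hd2 i hi.
by rewrite (@swC i y (sw i x z) z) // swA.
Qed.
End Comb.

Section Alg.
Variables (n : nat) (r : 'I_n -> nat) (K : fieldType).
Implicit Types a b c d p q z : Nset r.

Lemma dist_sym p q : dist p q = dist q p.
Proof. by apply: eq_card => j; rewrite !inE eq_sym. Qed.

Lemma G_conn t S (i : 'I_n) a b : switchable t S -> (i < t)%N ->
  connected_in S a b -> forall z, sw i a z \in S <-> sw i b z \in S.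
Proof.
move=> hS hi /and3P[aS bS ab].
pose Q c := c \in S /\ forall z, sw i a z \in S <-> sw i c z \in S.
suff: Q b by case.
apply: (connect_inv ab); first by split.
move=> u v [uS hu] /and3P[_ vS huv]; split => // z; rewrite hu; split.
  exact: (G_step hS hi uS vS huv).
by apply: (G_step hS hi vS uS); rewrite // dist_sym.
Qed.

Lemma sw_in t S (i : 'I_n) a b : switchable t S -> (i < t)%N ->
  connected_in S a b -> sw i a b \in S /\ sw i b a \in S.
Proof.
move=> hS hi hab; have := G_conn hS hi hab; move: hab => /and3P[aS bS _] h.
by split; [apply/(h b); rewrite swK | apply/(h a); rewrite swK].
Qed.

Lemma fgen_le2 t (i : 'I_n) p q : (i < t)%N -> (dist p q <= 2)%N ->
  @Ibin n r K t (fgen K i p q).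
Proof.
move=> hi hd; case: (ltngtP (dist p q) 2) hd => // h _.
  have: (dist p q <= 1)%N by [].
  rewrite /fgen; move/(dist_le1 i) => [[-> ->]|[-> ->]]; rewrite ?subrr.
    exact: ig0.
  rewrite mulrC subrr; exact: ig0.
by apply: igG; exists i, p, q.
Qed.

Lemma fgen_id (i : 'I_n) (A B C : Nset r) : C i = A i ->
  xv K C * fgen K i A B =
  xv K A * fgen K i C B + xv K (sw i B A) * fgen K i A (sw i C B).
Proof.
move=> hC; rewrite /fgen.
rewrite (@swC _ _ i B C A) // (@swC _ _ i A (sw i C B) B) ?swA // swB.
rewrite (swE hC); ring.
Qed.

Definition phiv (S : {set Nset r}) : 'I_#|Nset r| -> K :=
  fun k => if enum_val k \in S then 1 else 0.

Lemma phi_xv S a : meval (phiv S) (xv K a) = if a \in S then 1 else 0.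
Proof. by rewrite /xv mevalXU /phiv enum_rankK. Qed.

Lemma mono t S (i : 'I_n) a b : switchable t S -> (i < t)%N -> connected_in S a b ->
  exists m, meval (phiv S) m = 1 /\ @Ibin n r K t (m * fgen K i a b).
Proof.
move=> hS hi hab; move: (hab) => /and3P[aS bS ab].
pose Q c := [/\ c \in S, (forall z, sw i a z \in S <-> sw i c z \in S) &
   exists m, meval (phiv S) m = 1 /\ @Ibin n r K t (m * fgen K i a (sw i c b))].
suff: Q b by case=> _ _; rewrite swK.
apply: (connect_inv ab).
  split => //; exists 1; rewrite meval1 mul1r; split => //.
  apply: fgen_le2 => //; exact: leq_trans (dist_sw1 _ _ _) _.
move=> u v [uS hu [m [hm hI]]] /and3P[_ vS huv]; split => //.
  move=> z; rewrite hu; split.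
    exact: (G_step hS hi uS vS huv).
  by apply: (G_step hS hi vS uS); rewrite // dist_sym.
have CS : sw i u a \in S by apply/hu; rewrite swK.
exists (xv K (sw i u a) * m); split; first by rewrite mevalM phi_xv CS hm mul1r.
rewrite [xv K _ * m]mulrC -mulrA fgen_id ?swA //.
rewrite (@swB _ _ i u a) (@swC _ _ i u (sw i v b) b) ?swA //.
rewrite mulrDr; apply: igD.
  rewrite mulrA; apply: igM; apply: fgen_le2 => //; exact: dist_sw_le.
by rewrite mulrA [m * _]mulrC -mulrA; apply: igM.
Qed.

End Alg.

Theorem corollary4p14 (n : nat) (r : 'I_n -> nat) (K : fieldType)
  (hr : forall j, (0 < r j)%N)
  (t : nat) (ht : (1 <= t <= n)%N)
  (S : {set Nset r})
  (hS : @switchable n r t S)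
  (hass : associated_prime (@Ibin n r K t) (@Pideal n r K t S)) :
  forall (m : nat) (Q : 'I_m -> Rpoly r K -> Prop),
    primary_decomposition (@Ibin n r K t) Q ->
    forall j : 'I_m,
      (forall p, radical (Q j) p <-> @Pideal n r K t S p) ->
      subideal (@Itilde n r K t S) (Q j).
Proof.
move=> m Q [hprim hI _] j hj.
have [[hid _] hpr] := hprim j.
apply: ig_sub => // g [i [a [b [hi hab ->]]]].
have [m0 [hm0 hIm]] := mono K hS hi hab.
have := (proj1 (hI _) hIm j); rewrite mulrC => /hpr [] // /hj hP.
exfalso.
have hker : forall p, @Pideal n r K t S p -> meval (phiv K S) p = 0.
  apply: ig_sub.
    split; first exact: meval0.
      by move=> x y hx hy; rewrite mevalD hx hy addr0.
    by move=> x y hy; rewrite mevalM hy mulr0.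
  move=> g0 [[c [cS ->]]|[i' [c [d [hi' hcd ->]]]]].
    by rewrite phi_xv (negbTE cS).
  have [s1 s2] := sw_in hS hi' hcd.
  move: hcd => /and3P[cS dS _].
  by rewrite /fgen mevalB !mevalM !phi_xv cS dS s1 s2 subrr.
by move: (hker _ hP); rewrite hm0 => /eqP; rewrite oner_eq0.
Qed.
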